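(* In the Mean-Var-BTS-RED setting, let $p=\frac1{4e\sqrt\pi}$ and let $S'_t=\{\boldsymbol x\in\mathcal X:\Delta(\boldsymbol x)>\omega c_t\sigma_{t-1}(\boldsymbol x)+(1-\omega)c'_t\sigma'_{t-1}(\boldsymbol x)\}$ with $\Delta(\boldsymbol x)=h(\boldsymbol x^*_\omega)-h(\boldsymbol x)$. For every $t\ge1$ and all histories $\mathcal F_{t-1},\mathcal F'_{t-1}$ on which both $E^f(t)$ and $E^g(t)$ hold, $$\mathbb P\big(\boldsymbol x^{(b)}_t\in\mathcal X\setminus S'_t\mid\mathcal F_{t-1},\mathcal F'_{t-1}\big)\ge p^2-1/t^2\qquad\text{for all }b\in[b_t].$$
   Context: Setting (Mean-Var-BTS-RED). $\mathcal X$ finite; $k,k'$ squared-exponential kernels on $\mathcal X$ (so $k(\boldsymbol x,\boldsymbol x)=k'(\boldsymbol x,\boldsymbol x)=1$). Unknown $f\in\mathcal H_k$ with $\|f\|_{\mathcal H_k}\le B$, unknown noise variance $\sigma^2:\mathcal X\to(0,\infty)$ with maximum $\sigma^2_{\max}$, and $g=-\sigma^2$ with $\|g\|_{\mathcal H_{k'}}\le B'$. Querying $\boldsymbol x$ returns $f(\boldsymbol x)+\epsilon$, $\epsilon\sim\mathcal N(0,\sigma^2(\boldsymbol x))$ independently. Horizon $T$, budget $\mathbb B\in\mathbb N$, $R^2>0$, weight $\omega\in[0,1]$, $\lambda=1+2/T$, $\delta\in(0,1)$, minimum replication $n_{\min}\ge2$. GP posterior formulas: from pairs $(\boldsymbol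 x_i,y_i)$, $\mu(\boldsymbol x)=\boldsymbol k(\boldsymbol x)^\top(\boldsymbol K+\lambda I)^{-1}\boldsymbol y$, $s^2(\boldsymbol x,\boldsymbol x')=k(\boldsymbol x,\boldsymbol x')-\boldsymbol k(\boldsymbol x)^\top(\boldsymbol K+\lambda I)^{-1}\boldsymbol k(\boldsymbol x')$. $\mu_{t-1},\sigma^2_{t-1}(\cdot,\cdot)$ (kernel $k$) use pairs $(\boldsymbol x^{(b)}_{t'},y^{(b)}_{t'})$ and $\mu'_{t-1},\sigma'^2_{t-1}(\cdot,\cdot)$ (kernel $k'$) use pairs $(\boldsymbol x^{(b)}_{t'},\widetilde y^{(b)}_{t'})$, $t'<t$; $\sigma_{t-1}(\boldsymbol x)$, $\sigma'_{t-1}(\boldsymbol x)$ are the posterior standard deviations. Algorithm: in iteration $t$, for $b=1,2,\dots$: independently sample $f^{(b)}_t\sim\mathcal{GP}(\mu_{t-1},\beta_t^2\sigma^2_{t-1})$ and $g^{(b)}_t\sim\mathcal{GP}(\mu'_{t-1},\beta_t'^2\sigma'^2_{t-1})$; set $\boldsymbol x^{(b)}_t\in\arg\max_{\boldsymbol x}[\omega f^{(b)}_t(\boldsymbol x)+(1-\omega)g^{(b)}_t(\boldsymbol x)]$ and $n^{(b)}_t=\max\{n_{\min},\lceil(-\mu'_{t-1}(\boldsymbol x^{(b)}_t)+\beta'_t\sigma'_{t-1}(\boldsymbol x^{(b)}_t))/R^2\rceil\}$; stop at the first $b$ with $\sum_{b'\le b}n^{(b')}_t\ge\mathbb B$ and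 set $b_t=b-1$. Each $\boldsymbol x^{(b)}_t$, $b\in[b_t]$, is queried $n^{(b)}_t$ times; $y^{(b)}_t$ is the empirical mean and $\widetilde y^{(b)}_t=-\frac1{n^{(b)}_t-1}\sum_n(y^{(b)}_{t,n}-y^{(b)}_t)^2$ the negated unbiased empirical variance. $\tau_{t-1}=\sum_{t'<t}b_{t'}$. $\Gamma_m$ ($\Gamma'_m$) is the maximum over $|A|\le m$ of $\frac12\log\det(I+\lambda^{-1}K_A)$ for $k$ ($k'$). $\beta_t=B+R\sqrt{2(\Gamma_{\tau_{t-1}}+1+\log(3/\delta))}$, $\beta'_t=B'+R'\sqrt{2(\Gamma'_{\tau_{t-1}}+1+\log(3/\delta))}$ for a constant $R'>0$, $c_t=\beta_t(1+\sqrt{2\log(2\mathbb B|\mathcal X|t^2)})$, $c'_t=\beta'_t(1+\sqrt{2\log(2\mathbb B|\mathcal X|t^2)})$. $h(\boldsymbol x)=\omega f(\boldsymbol x)+(1-\omega)g(\boldsymbol x)$, $\boldsymbol x^*_\omega\in\arg\max h$. $\mathcal F_{t-1}$ ($\mathcal F'_{t-1}$) is the history of observed (input, empirical mean) (resp. (input, empirical noise variance)) pairs up to iteration $t-1$. $E^f(t)$: $|\mu_{t-1}(\boldsymbol x)-f(\boldsymbol x)|\le\beta_t\sigma_{t-1}(\boldsymbol x)$ for all $\boldsymbol x$; $E^g(t)$: $|\mu'_{t-1}(\boldsymbol x)-g(\boldsymbol x)|\le\beta'_t\sigma'_{t-1}(\boldsymbol x)$ for all $\boldsymbol x$. *)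

(* Defs.v *)
From HB Require Import structures.
From mathcomp Require Import all_boot all_order all_algebra.
From mathcomp Require Import all_classical all_reals all_analysis.
From mathcomp Require Import normal_distribution.

Set Implicit Arguments.
Unset Strict Implicit.
Unset Printing Implicit Defensive.

Import Order.TTheory GRing.Theory Num.Theory.

Local Open Scope classical_set_scope.
Local Open Scope ring_scope.

Section Defs.
Context {R : realType}.

Definition se_kernel (X : Type) (dim : nat) (emb : X -> 'rV[R]_dim) (l : R)
  (x y : X) : R :=
  expR (- (\sum_(i < dim) (emb x 0 i - emb y 0 i) ^+ 2) / (2 * l ^+ 2)).

(* RKHS of a kernel k on a finite set X: span of the k(.,x); the RKHS norm of
   f = sum_x a_x k(.,x) is sqrt(a^T K a) (independent of the representation).
   [in_rkhs_ball k f B] means  f \in H_k  and  ||f||_{H_k} <= B. *)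
Definition in_rkhs_ball (X : finType) (k : X -> X -> R) (f : X -> R) (B : R) :
  Prop :=
  0 <= B /\
  exists a : X -> R, (forall y, f y = \sum_x a x * k y x) /\
     \sum_x \sum_y a x * a y * k x y <= B ^+ 2.

Section Posterior.
Variables (X : finType) (k : X -> X -> R) (lam : R).

Definition gram (D : seq (X * R)) : 'M[R]_(size D) :=
  \matrix_(i, j) k (tnth (in_tuple D) i).1 (tnth (in_tuple D) j).1.
Definition kvec (D : seq (X * R)) (x : X) : 'cV[R]_(size D) :=
  \col_i k (tnth (in_tuple D) i).1 x.
Definition yvec (D : seq (X * R)) : 'cV[R]_(size D) :=
  \col_i (tnth (in_tuple D) i).2.

Definition post_mean (D : seq (X * R)) (x : X) : R :=
  (((kvec D x)^T *m invmx (gram D + lam%:M)) *m yvec D) 0 0.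
Definition post_cov (D : seq (X * R)) (x x' : X) : R :=
  k x x' - (((kvec D x)^T *m invmx (gram D + lam%:M)) *m kvec D x') 0 0.
Definition post_sd (D : seq (X * R)) (x : X) : R := Num.sqrt (post_cov D x x).

(* maximum information gain Gamma_m: max over multisets (sequences) A of
   at most m inputs of 1/2 log det (I + lam^{-1} K_A) *)
Definition max_info_gain (m : nat) : R :=
  \big[Num.max/0]_(n < m.+1)
    \big[Num.max/0]_(s : {ffun 'I_n -> X})
       (ln (\det (1%:M + lam^-1 *: \matrix_(i, j) k (s i) (s j))) / 2).

End Posterior.

Section Prob.
Context {d : measure_display} {Omega : measurableType d}.
Variable P : probability Omega R.

Definition gauss_law (m v : R) : set R -> \bar R :=
  fun A => if v == 0 then \d_m A else normal_prob m (Num.sqrt v) A.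

Definition has_law (Y : Omega -> R) (mu : set R -> \bar R) : Prop :=
  measurable_fun setT Y /\
  forall A : set R, measurable A -> P (Y @^-1` A) = mu A.

(* F is a Gaussian random vector indexed by the finite set X with mean m and
   covariance C, i.e. F ~ GP(m, C) restricted to X: every linear combination
   sum_x a_x F(x) is N(sum a m, a^T C a). *)
Definition is_gauss_vec (X : finType) (F : Omega -> X -> R)
  (m : X -> R) (C : X -> X -> R) : Prop :=
  forall a : X -> R,
    has_law (fun w => \sum_x a x * F w x)
      (gauss_law (\sum_x a x * m x) (\sum_x \sum_y a x * a y * C x y)).

(* independence of the random vectors F and G (product rule on the
   generating pi-system of measurable rectangles) *)
Definition indep_vec (X : finType) (F G : Omega -> X -> R) : Prop :=
  forall A B : X -> set R,
    (forall x, measurable (A x)) -> (forall x, measurable (B x)) ->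
    P [set w | forall x, A x (F w x) /\ B x (G w x)] =
    (P [set w | forall x, A x (F w x)] * P [set w | forall x, B x (G w x)])%E.

End Prob.

Definition beta_par (B Rn Gam delta : R) : R :=
  B + Rn * Num.sqrt (2 * (Gam + 1 + ln (3 / delta))).
Definition c_par (beta : R) (Bud cardX t : nat) : R :=
  beta * (1 + Num.sqrt (2 * ln (2 * Bud%:R * cardX%:R * t%:R ^+ 2))).

End Defs.

(* Main.v *)
Require Import Defs.
From HB Require Import structures.
From mathcomp Require Import all_boot all_order all_algebra.
From mathcomp Require Import all_classical all_reals all_analysis.
From mathcomp Require Import normal_distribution measurable_realfun.
From mathcomp Require Import ring lra.
Import Order.TTheory GRing.Theory Num.Theory.
Local Open Scope classical_set_scope.
Local Open Scope ring_scope.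
Section N.
Variable R : realType.
Local Open Scope ereal_scope.

Lemma pdf_pos (m s x : R) : (0 < s)%R ->
  normal_pdf m s x = (normal_peak s * expR (- (x - m) ^+ 2 / (s ^+ 2 *+ 2)))%R.
Proof. by move=> s0; rewrite /normal_pdf gt_eqF. Qed.

Lemma peak_eq (s : R) : (0 < s)%R -> normal_peak s = (s * Num.sqrt (pi *+ 2))^-1%R.
Proof.
move=> s0; rewrite /normal_peak -mulrnAr sqrtrM ?sqr_ge0// sqrtr_sqr gtr0_norm//.
Qed.

Lemma normal_lb (m s : R) : (0 < s)%R ->
  ((4 * expR 1 * Num.sqrt pi)^-1)%:E <= normal_prob m s [set y | m + s <= y]%R.
Proof.
move=> s0.
pose I := `[m + s, m + s * (3/2)]%R.
have mI : measurable [set` I] by exact: measurable_itv.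
have mA : measurable [set y : R | m + s <= y]%R.
  have -> : [set y : R | m + s <= y]%R = [set` `[m + s, +oo[%R].
    by apply/seteqP; split => y /=; rewrite in_itv /= andbT.
  exact: measurable_itv.
apply: (@le_trans _ _ (normal_prob m s [set` I])); last first.
  apply: le_measure; rewrite ?inE //.
  by move=> y /=; rewrite in_itv /= => /andP[].
set r := (normal_peak s * expR (- (9/8)))%R.
apply: (@le_trans _ _ (\int[lebesgue_measure]_(x in [set` I]) (cst r%:E x))); last first.
  apply: ge0_le_integral => //.
  - by move=> x _; rewrite lee_fin /r mulr_ge0 ?normal_peak_ge0 ?expR_ge0.
  - by apply/measurable_EFinP; apply: measurable_funTS; exact: measurable_normal_pdf.
  - move=> x; rewrite /= in_itv /= => /andP[h1 h2].
    rewrite lee_fin pdf_pos // /r ler_wpM2l ?normal_peak_ge0 // ler_expR.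
    rewrite mulNr lerN2 ler_pdivrMr; last by rewrite pmulrn_lgt0 // exprn_gt0.
    have h3 : (0 <= x - m)%R by rewrite subr_ge0; apply: le_trans h1; rewrite lerDl ltW.
    have h4 : (x - m <= s * (3/2))%R by rewrite lerBlDl.
    have : ((x - m) ^+ 2 <= (s * (3/2)) ^+ 2)%R by rewrite ler_pXn2r // ?nnegrE ?mulr_ge0 // ltW.
    move=> h5; apply: (le_trans h5).
    by rewrite (_ : 9/8 * _ = (s*(3/2))^+2)%R //; rewrite mulr2n; field.
rewrite integral_cst //.
rewrite [X in (_ * X)%E](_ : _ = ((m + s * (3/2))%:E - (m + s)%:E)); last first.
  rewrite (_ : _ - _ = if (I.1 < I.2)%E then (I.2 - I.1)%E else 0); last first.
    by rewrite /= lte_fin ifT //; lra.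
  exact: lebesgue_measure_itv.
idtac.
rewrite -EFinD -EFinM lee_fin.
have ss : (s * (3 / 2) - s = s / 2)%R by field.
rewrite opprD addrACA subrr add0r ss /r peak_eq //.
have e8 : (7/8 <= expR (- (1/8)) :> R)%R.
  by apply: le_trans (expR_ge1Dx _); lra.
have ee : (expR (- (9/8)) = expR (-1) * expR (- (1/8)) :> R)%R.
  by rewrite -expRD; congr expR; lra.
rewrite ee expRN.
have pi0 : (0 < pi :> R)%R by exact: pi_gt0.
have sp0 : (0 < Num.sqrt pi :> R)%R by rewrite sqrtr_gt0.
have e0 : (0 < expR 1 :> R)%R by exact: expR_gt0.
have s2 : (Num.sqrt (pi *+ 2) = Num.sqrt 2 * Num.sqrt pi :> R)%R.
  by rewrite -sqrtrM // mulr_natl.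
have s27 : (Num.sqrt 2 <= 7/4 :> R)%R.
  have -> : (7/4 : R)%R = Num.sqrt ((7/4) ^+ 2)%R by rewrite sqrtr_sqr ger0_norm //; lra.
  rewrite ler_sqrt; last by rewrite exprn_ge0 //; lra.
  lra.
have s20 : (0 < Num.sqrt 2 :> R)%R by rewrite sqrtr_gt0.
rewrite s2.
set E := expR 1; set q := Num.sqrt 2; set sp := Num.sqrt pi.
set u := expR (- (1/8)).
rewrite -[leLHS]mul1r ler_pdivrMr; last by rewrite !mulr_gt0.
have -> : ((s * (q * sp))^-1 * (E^-1 * u) * (s / 2) * (4 * E * sp) = 2 * u / q)%R.
  by field; rewrite !gt_eqF.
rewrite ler_pdivlMr // mul1r; apply: le_trans s27 _; move: e8; rewrite -/u; lra.
Qed.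

Lemma normal_ub (m s c : R) : (0 < s)%R -> (0 <= c)%R ->
  normal_prob m s [set y | m + s * c < y]%R <= (expR (- c ^+ 2 / 2))%:E.
Proof.
move=> s0 c0.
have mA : measurable [set y : R | m + s * c < y]%R.
  have -> : [set y : R | m + s * c < y]%R = [set` `]m + s * c, +oo[%R].
    by apply/seteqP; split => y /=; rewrite in_itv /= andbT.
  exact: measurable_itv.
set e := expR (- c ^+ 2 / 2).
have e0 : (0 <= e)%R by exact: expR_ge0.
apply: (@le_trans _ _ (\int[lebesgue_measure]_(x in [set y : R | m + s * c < y]%R)
   (e%:E * (normal_pdf (m + s * c) s x)%:E))).
  apply: ge0_le_integral => //.
  - by move=> x _; rewrite lee_fin normal_pdf_ge0.
  - by apply/measurable_EFinP; apply: measurable_funTS; exact: measurable_normal_pdf.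
  - apply: measurable_funTS; apply/measurable_EFinP => /=.
    by apply: measurable_funM => //; exact: measurable_normal_pdf.
  - move=> x /= hx; rewrite -EFinM lee_fin !pdf_pos // mulrCA ler_wpM2l ?normal_peak_ge0 //.
    rewrite /e -expRD ler_expR.
    have D0 : (0 < s ^+ 2 *+ 2)%R by rewrite pmulrn_lgt0 // exprn_gt0.
    rewrite -subr_ge0.
    have -> : (- c ^+ 2 / 2 + - (x - (m + s * c)) ^+ 2 / (s ^+ 2 *+ 2) -
        - (x - m) ^+ 2 / (s ^+ 2 *+ 2) = (2 * (x - (m + s * c)) * (s * c)) / (s ^+ 2 *+ 2))%R.
      by rewrite mulr2n; field; rewrite gt_eqF.
    apply: divr_ge0; last exact: ltW.
    by rewrite !mulr_ge0 // ?subr_ge0 ltW.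
rewrite ge0_integralZl_EFin //; last 2 first.
  - by move=> x _; rewrite lee_fin normal_pdf_ge0.
  - by apply/measurable_EFinP; apply: measurable_funTS; exact: measurable_normal_pdf.
rewrite -[X in _ <= X]mule1; apply: lee_pmul => //.
- by apply: integral_ge0 => x _; rewrite lee_fin normal_pdf_ge0.
- exact: (probability_le1 (normal_prob (m + s * c) s) mA).
Qed.

Lemma meas_ge (a : R) : measurable [set y : R | a <= y]%R.
Proof.
have -> : [set y : R | a <= y]%R = [set` `[a, +oo[%R].
  by apply/seteqP; split => y /=; rewrite in_itv /= andbT.
exact: measurable_itv.
Qed.

Lemma meas_gt (a : R) : measurable [set y : R | a < y]%R.
Proof.
have -> : [set y : R | a < y]%R = [set` `]a, +oo[%R].
  by apply/seteqP; split => y /=; rewrite in_itv /= andbT.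
exact: measurable_itv.
Qed.

Lemma sqrt_sq_mul (a c : R) : (0 <= a)%R -> Num.sqrt (a ^+ 2 * c) = (a * Num.sqrt c)%R.
Proof. by move=> a0; rewrite sqrtrM ?sqr_ge0 // sqrtr_sqr ger0_norm. Qed.

Lemma np0 (m a : R) : (0 <= a <= 1)%R -> normal_prob m 0 [set` `[0, a]%R] = a%:E.
Proof.
move=> /andP[a0 a1].
have m01 : measurable ([set` `[0, 1]%R] : set R) by exact: measurable_itv.
have m0a : measurable ([set` `[0, a]%R] : set R) by exact: measurable_itv.
rewrite /normal_prob /normal_pdf eqxx.
have E : [set` `[0, 1]%R] `&` [set` `[0, a]%R] = [set` `[0, a]%R] :> set R.
  apply/seteqP; split => y /=; rewrite !in_itv /=.
    by case=> _.
  by move=> /andP[y0 ya]; split => //; apply/andP; split => //; apply: le_trans a1.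
transitivity (lebesgue_measure ([set` `[0, a]%R] : set R)).
  by rewrite -[X in lebesgue_measure X]E; exact: integral_indic.
rewrite (_ : a%:E = if (`[0, a]%R.1 < `[0, a]%R.2)%E then (`[0, a]%R.2 - `[0, a]%R.1)%E else 0).
  exact: lebesgue_measure_itv.
rewrite /=; case: ifP; first by rewrite sube0.
by rewrite lte_fin => /negbT; rewrite -leNgt => a0'; congr EFin; apply/eqP; rewrite eq_le a0 a0'.
Qed.
End N.

Lemma aux1 {R : realType} (F M Fm bt sd s : R) : F <= M + bt * sd * s -> M - Fm <= bt * sd ->
  F <= Fm + bt * (1 + s) * sd.
Proof.
move=> h1 h2; rewrite (_ : bt * (1 + s) * sd = bt * sd + bt * sd * s); last by ring.
lra.
Qed.
Lemma fin_aux {R : realType} (om fx gx fz gz Fx Gx Fz Gz c1 c2 : R) :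
  om * Fz + (1-om) * Gz <= om * (fz + c1) + (1-om) * (gz + c2) ->
  om * fx + (1-om) * gx <= om * Fx + (1-om) * Gx ->
  om * Fx + (1-om) * Gx <= om * Fz + (1-om) * Gz ->
  om * c1 + (1-om) * c2 < (om*fx + (1-om)*gx) - (om*fz + (1-om)*gz) -> False.
Proof. move=> h1 h2 h3 h4; lra. Qed.

Section G.
Variable R : realType.
Context {d : measure_display} {Omega : measurableType d}.
Variable P : probability Omega R.
Local Open Scope ereal_scope.

Lemma law_meas (Y : Omega -> R) mu : has_law P Y mu ->
  forall A, measurable A -> measurable (Y @^-1` A).
Proof. by move=> [mY _] A mA; rewrite -[_ @^-1` _]setTI; exact: mY. Qed.

Lemma has_law_ext (Y Z : Omega -> R) mu : (forall w, Y w = Z w) ->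
  has_law P Y mu -> has_law P Z mu.
Proof. by move=> e; rewrite (_ : Y = Z) //; apply: funext. Qed.

Lemma var_ge0 (Y : Omega -> R) m v : has_law P Y (gauss_law m v) ->
  has_law P (fun w => 2 * Y w)%R (gauss_law (2 * m) (2 * 2 * v))%R -> (0 <= v)%R.
Proof.
move=> h1 h2; rewrite leNgt; apply/negP => v0.
have v0' : (2 * 2 * v < 0)%R by rewrite pmulr_rlt0.
have [_ l1] := h1; have [_ l2] := h2.
have := l2 _ (measurable_itv `[0, 1]%R).
have := l1 _ (measurable_itv `[0, 1/2]%R).
have q1 : Num.sqrt v = 0%R by apply/eqP; rewrite sqrtr_eq0 ltW.
have q2 : Num.sqrt (2 * 2 * v) = 0%R by apply/eqP; rewrite sqrtr_eq0 ltW.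
rewrite /gauss_law (lt_eqF v0) (lt_eqF v0') q1 q2.
rewrite !np0; try by apply/andP; split; lra.
have -> : (fun w => 2 * Y w)%R @^-1` [set` `[0, 1]%R] = Y @^-1` [set` `[0, 1/2]%R].
  apply/seteqP; split => w /=; rewrite !in_itv /= => /andP[a b]; apply/andP; split.
  - by rewrite -(pmulr_rge0 _ (ltr0Sn _ 1)).
  - by rewrite ler_pdivlMr // mulrC.
  - by rewrite pmulr_rge0.
  - by rewrite mulrC -ler_pdivlMr.
by move=> -> [] /eqP; rewrite -subr_eq0 => /eqP; lra.
Qed.

Lemma tail_lb (Y : Omega -> R) m v th : has_law P Y (gauss_law m v) -> (0 <= v)%R ->
  (th <= m + Num.sqrt v)%R ->
  ((4 * expR 1 * Num.sqrt pi)^-1)%:E <= P [set w | th <= Y w]%R.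
Proof.
move=> [mY l] v0 th0.
have mA : measurable [set y : R | th <= y]%R.
  have -> : [set y : R | th <= y]%R = [set` `[th, +oo[%R].
    by apply/seteqP; split => y /=; rewrite in_itv /= andbT.
  exact: measurable_itv.
rewrite (_ : [set w | th <= Y w]%R = Y @^-1` [set y | th <= y]%R) // l // /gauss_law.
case: eqP => [v00|/eqP vn0].
  rewrite diracE mem_set; last by move: th0; rewrite v00 sqrtr0 addr0.
  apply: le_trans (@normal_lb R 0%R 1%R ltr01) _.
  by rewrite [X in _ <= X](_ : _ = 1) //; apply: probability_le1; exact: meas_ge.
have s0 : (0 < Num.sqrt v)%R by rewrite sqrtr_gt0 lt_def vn0.
apply: le_trans (@normal_lb R m _ s0) _.
apply: le_measure; rewrite ?inE //.
  have -> : [set y : R | m + Num.sqrt v <= y]%R = [set` `[m + Num.sqrt v, +oo[%R].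
    by apply/seteqP; split => y /=; rewrite in_itv /= andbT.
  exact: measurable_itv.
by move=> y /= hy; apply: le_trans hy.
Qed.

Lemma tail_ub (Y : Omega -> R) m v c : has_law P Y (gauss_law m v) -> (0 <= v)%R ->
  (0 <= c)%R -> P [set w | m + Num.sqrt v * c < Y w]%R <= (expR (- c ^+ 2 / 2))%:E.
Proof.
move=> [mY l] v0 c0.
have mA : measurable [set y : R | m + Num.sqrt v * c < y]%R.
  have -> : [set y : R | m + Num.sqrt v * c < y]%R = [set` `]m + Num.sqrt v * c, +oo[%R].
    by apply/seteqP; split => y /=; rewrite in_itv /= andbT.
  exact: measurable_itv.
rewrite (_ : [set w | _ < Y w]%R = Y @^-1` [set y | m + Num.sqrt v * c < y]%R) // l // /gauss_law.
case: eqP => [v00|/eqP vn0].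
  rewrite diracE memNset; first by rewrite lee_fin expR_ge0.
  by rewrite /= v00 sqrtr0 mul0r addr0 ltxx.
have s0 : (0 < Num.sqrt v)%R by rewrite sqrtr_gt0 lt_def vn0.
exact: normal_ub.
Qed.

Lemma sum_pt (X : finType) (x : X) (c : R) (G : X -> R) :
  (\sum_y (if y == x then c else 0) * G y = c * G x)%R.
Proof.
rewrite (bigD1 x) //= eqxx big1 ?addr0 // => y /negbTE ->; by rewrite mul0r.
Qed.

Lemma marg (X : finType) (F : Omega -> X -> R) m C (c : R) x :
  is_gauss_vec P F m C ->
  has_law P (fun w => c * F w x)%R (gauss_law (c * m x) (c * c * C x x))%R.
Proof.
move=> /(_ (fun y => if y == x then c else 0%R)).
have -> : (\sum_x0 \sum_y (if x0 == x then c else 0) * (if y == x then c else 0) * C x0 y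
   = c * c * C x x)%R.
  under eq_bigr do under eq_bigr do rewrite -mulrA.
  under eq_bigr => i _ do rewrite -mulr_sumr (@sum_pt _ x c (fun y => C i y)).
  by rewrite (@sum_pt _ x c (fun y => c * C y x)%R) mulrA.
rewrite (@sum_pt _ x c m).
by apply: has_law_ext => w; rewrite (@sum_pt _ x c (F w)).
Qed.

End G.


Theorem mainTheorem14
  (R : realType) (X : finType) (dim : nat) (emb : X -> 'rV[R]_dim)
  (emb_inj : injective emb) (l l' : R) (hl : 0 < l) (hl' : 0 < l')
  (f sigma2 : X -> R) (B B' Rn Rn' omega delta : R)
  (T Bud nmin t : nat) (H : seq (X * R * R)) (xstar : X)
  (d : measure_display) (Omega : measurableType d) (P : probability Omega R)
  (fs gs : nat -> Omega -> X -> R) (xs : nat -> Omega -> X) :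
  let k := se_kernel emb l in
  let k' := se_kernel emb l' in
  let g := fun x => - sigma2 x in
  let lam := 1 + 2 / T%:R in
  (* history: (input, empirical mean, negated empirical variance) triples *)
  let Hf := [seq (z.1.1, z.1.2) | z <- H] in
  let Hg := [seq (z.1.1, z.2) | z <- H] in
  let tau := size H in
  let beta := beta_par B Rn (max_info_gain k lam tau) delta in
  let beta' := beta_par B' Rn' (max_info_gain k' lam tau) delta in
  let ct := c_par beta Bud #|X| t in
  let ct' := c_par beta' Bud #|X| t in
  let mu := post_mean k lam Hf in
  let sd := post_sd k lam Hf in
  let mu' := post_mean k' lam Hg in
  let sd' := post_sd k' lam Hg in
  let h := fun x => omega * f x + (1 - omega) * g x in
  let S' := [set x | h xstar - h x > omega * ct * sd x + (1 - omega) * ct' * sd' x] in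
  let p := (4 * expR 1 * Num.sqrt pi)^-1 in
  in_rkhs_ball k f B ->
  (forall x, 0 < sigma2 x) ->
  in_rkhs_ball k' g B' ->
  (0 < T)%N -> (0 < Bud)%N -> 0 < Rn -> 0 < Rn' ->
  0 <= omega <= 1 -> 0 < delta < 1 -> (2 <= nmin)%N ->
  (1 <= t)%N ->
  (forall x, h x <= h xstar) ->
  (* E^f(t) and E^g(t) hold on the given history *)
  (forall x, `|mu x - f x| <= beta * sd x) ->
  (forall x, `|mu' x - g x| <= beta' * sd' x) ->
  (* the b-th Thompson samples f^(b) ~ GP(mu, beta^2 s^2), g^(b) ~ GP(mu', beta'^2 s'^2),
     independent, and x^(b) a (measurable) maximiser of omega f^(b) + (1-omega) g^(b) *)
  (forall b, is_gauss_vec P (fs b) mu (fun x y => beta ^+ 2 * post_cov k lam Hf x y)) ->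
  (forall b, is_gauss_vec P (gs b) mu' (fun x y => beta' ^+ 2 * post_cov k' lam Hg x y)) ->
  (forall b, indep_vec P (fs b) (gs b)) ->
  (forall b w x, omega * fs b w x + (1 - omega) * gs b w x
                 <= omega * fs b w (xs b w) + (1 - omega) * gs b w (xs b w)) ->
  (forall b x, measurable [set w | xs b w = x]) ->
  forall b, (1 <= b)%N ->
    ((p ^+ 2 - (t%:R ^+ 2)^-1)%:E <= P [set w | ~ S' (xs b w)])%E.

Proof.
move=> k k' g lam Hf Hg tau beta beta' ct ct' mu sd mu' sd' h S' p.
move=> [B0 _] sig0 [B'0 _] T0 Bud0 Rn0 Rn'0 /andP[om0 om1] /andP[de0 de1] nmin2 t1.
move=> hmax Ef Eg gf gg ind hxs mxs b b1.
have beta0 : 0 <= beta by rewrite /beta /beta_par addr_ge0 // mulr_ge0 // ltW.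
have beta'0 : 0 <= beta' by rewrite /beta' /beta_par addr_ge0 // mulr_ge0 // ltW.
pose v x := beta ^+ 2 * post_cov k lam Hf x x.
pose v' x := beta' ^+ 2 * post_cov k' lam Hg x x.
have lawf x : has_law P (fun w => fs b w x) (gauss_law (mu x) (v x)).
  have := @marg R _ _ P X (fs b) mu _ 1 x (gf b).
  rewrite !mul1r; apply: has_law_ext => w; by rewrite mul1r.
have lawg x : has_law P (fun w => gs b w x) (gauss_law (mu' x) (v' x)).
  have := @marg R _ _ P X (gs b) mu' _ 1 x (gg b).
  rewrite !mul1r; apply: has_law_ext => w; by rewrite mul1r.
have v0 x : 0 <= v x.
  exact: (@var_ge0 R _ _ P _ _ _ (lawf x) (@marg R _ _ P X (fs b) mu _ 2 x (gf b))).
have v'0 x : 0 <= v' x.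
  exact: (@var_ge0 R _ _ P _ _ _ (lawg x) (@marg R _ _ P X (gs b) mu' _ 2 x (gg b))).
have sqv x : Num.sqrt (v x) = beta * sd x.
  exact: (@sqrt_sq_mul R _ _ beta0).
have sqv' x : Num.sqrt (v' x) = beta' * sd' x.
  exact: (@sqrt_sq_mul R _ _ beta'0).
pose N : R := 2 * Bud%:R * #|X|%:R * t%:R ^+ 2.
have X0 : (0 < #|X|)%N by apply/card_gt0P; exists xstar.
have N1 : 1 <= N.
  rewrite /N; apply: mulr_ege1; last by rewrite expr_ge1 // ler1n.
  apply: mulr_ege1; last by rewrite ler1n.
  by apply: mulr_ege1; [lra | rewrite ler1n].
have N0 : 0 < N by apply: lt_le_trans N1; exact: ltr01.
pose sc := Num.sqrt (2 * ln N).
have sc0 : 0 <= sc by exact: sqrtr_ge0.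
have es : expR (- sc ^+ 2 / 2) = N^-1.
  rewrite sqr_sqrtr; last by rewrite mulr_ge0 // ln_ge0.
  rewrite (_ : - (2 * ln N) / 2 = - ln N); last by field.
  by rewrite expRN lnK // posrE.
pose Af := [set w | f xstar <= fs b w xstar].
pose Ag := [set w | g xstar <= gs b w xstar].
pose xi (i : nat) := nth xstar (enum X) i.
pose bad i := [set w | mu (xi i) + Num.sqrt (v (xi i)) * sc < fs b w (xi i)] `|`
              [set w | mu' (xi i) + Num.sqrt (v' (xi i)) * sc < gs b w (xi i)].
pose Bad := \big[setU/set0]_(i < #|X|) bad i.
pose Tg := [set w | ~ S' (xs b w)].
have mAf : measurable Af := @law_meas R _ _ P _ _ (lawf xstar) _ (meas_ge _ _).
have mAg : measurable Ag := @law_meas R _ _ P _ _ (lawg xstar) _ (meas_ge _ _).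
have mbad i : measurable (bad i).
  by apply: measurableU; [exact: (@law_meas R _ _ P _ _ (lawf _) _ (meas_gt _ _))|
     exact: (@law_meas R _ _ P _ _ (lawg _) _ (meas_gt _ _))].
have mBad : measurable Bad by apply: bigsetU_measurable => i _.
have mTg : measurable Tg.
  have -> : Tg = \bigcup_(x in ~` S') [set w | xs b w = x].
    apply/seteqP; split => w; first by move=> hw; exists (xs b w).
    by case=> x hx /= e; rewrite /Tg /= e.
  by apply: fin_bigcup_measurable; [exact: finite_finset | move=> x _; exact: mxs].
have p0 : 0 <= p by rewrite /p invr_ge0 mulr_ge0 ?sqrtr_ge0 // mulr_ge0 // expR_ge0.
have pAf : (p%:E <= P Af)%E.
  apply: (@tail_lb R _ _ P _ _ _ _ (lawf xstar) (v0 xstar)).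
  rewrite sqv; have := Ef xstar; rewrite ler_norml => /andP[e _]; lra.
have pAg : (p%:E <= P Ag)%E.
  apply: (@tail_lb R _ _ P _ _ _ _ (lawg xstar) (v'0 xstar)).
  rewrite sqv'; have := Eg xstar; rewrite ler_norml => /andP[e _]; lra.
have pbad i : (P (bad i) <= (N^-1 + N^-1)%:E)%E.
  apply: le_trans (measureU2 _ _ _) _; [exact: (@law_meas R _ _ P _ _ (lawf _) _ (meas_gt _ _))|
     exact: (@law_meas R _ _ P _ _ (lawg _) _ (meas_gt _ _))|].
  rewrite EFinD; apply: leeD; rewrite -es.
    exact: (@tail_ub R _ _ P _ _ _ _ (lawf _) (v0 _) sc0).
  exact: (@tail_ub R _ _ P _ _ _ _ (lawg _) (v'0 _) sc0).
have pBad : (P Bad <= ((t%:R ^+ 2)^-1)%:E)%E.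
  apply: le_trans (@Boole_inequality _ _ _ P bad #|X| (fun i _ => mbad i)) _.
  apply: (@le_trans _ _ (\sum_(i < #|X|) (N^-1 + N^-1)%:E)%R).
    by apply: lee_sum => i _; exact: pbad.
  rewrite sumEFin sumr_const card_ord lee_fin.
  have t0 : 0 < t%:R :> R by rewrite ltr0n.
  have Bd0 : 0 < Bud%:R :> R by rewrite ltr0n.
  have X0' : 0 < #|X|%:R :> R by rewrite ltr0n.
  have -> : (N^-1 + N^-1) *+ #|X| = (Bud%:R * t%:R ^+ 2)^-1.
    by rewrite -mulr_natr /N; field; rewrite !gt_eqF.
  rewrite lef_pV2 ?posrE ?mulr_gt0 ?exprn_gt0 //.
  have hB : 1 <= Bud%:R :> R by rewrite ler1n.
  have ht : 0 <= t%:R ^+ 2 :> R by rewrite exprn_ge0 // ltW.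
  by rewrite -[leLHS]mul1r ler_wpM2r.
have hind : P (Af `&` Ag) = (P Af * P Ag)%E.
  pose A x := if x == xstar then [set y | f xstar <= y] else setT.
  pose Bs x := if x == xstar then [set y | g xstar <= y] else setT.
  have mA x : measurable (A x) by rewrite /A; case: ifP => _ //; exact: meas_ge.
  have mB x : measurable (Bs x) by rewrite /Bs; case: ifP => _ //; exact: meas_ge.
  have := ind b A Bs mA mB.
  have EA : [set w | forall x, A x (fs b w x)] = Af.
    apply/seteqP; split => w /=.
      by move=> /(_ xstar); rewrite /A eqxx.
    by move=> hw x; rewrite /A; case: eqP => [->|].
  have EB : [set w | forall x, Bs x (gs b w x)] = Ag.
    apply/seteqP; split => w /=.
      by move=> /(_ xstar); rewrite /Bs eqxx.
    by move=> hw x; rewrite /Bs; case: eqP => [->|].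
  rewrite EA EB => <-; congr (P _).
  apply/seteqP; split => w /=.
    move=> [h1 h2] x; split.
      by move: h1; rewrite -EA => /(_ x).
    by move: h2; rewrite -EB => /(_ x).
  move=> hw; split.
    by rewrite -EA /= => x; case: (hw x).
  by rewrite -EB /= => x; case: (hw x).
have incl : Af `&` Ag `<=` Tg `|` Bad.
  move=> w [hAf hAg]; case: (pselect (Bad w)) => hB; [by right | left].
  have nb x : fs b w x <= mu x + Num.sqrt (v x) * sc /\ gs b w x <= mu' x + Num.sqrt (v' x) * sc.
    have ix : (index x (enum X) < #|X|)%N by rewrite cardT index_mem mem_enum.
    have xe : xi (index x (enum X)) = x by rewrite /xi nth_index // mem_enum.
    have nbi : ~ bad (index x (enum X)) w.
      by move=> hb; apply: hB; exact: (bigsetU_sup ix).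
    split; rewrite leNgt; apply/negP => hc; apply: nbi;
      rewrite /bad xe; [left|right] => //.
  rewrite /Tg /= => HS.
  have G3 := hxs b w xstar.
  move: HS G3; move: (xs b w) => z HS G3.
  have [fz gz] := nb z.
  have e1 := sqv z; have e2 := sqv' z.
  rewrite e1 in fz; rewrite e2 in gz.
  have := Ef z; rewrite ler_norml => /andP[_ ef].
  have := Eg z; rewrite ler_norml => /andP[_ eg].
  have ctE : ct = beta * (1 + sc) by exact: erefl.
  have ctE' : ct' = beta' * (1 + sc) by exact: erefl.
  have F1 : fs b w z <= f z + ct * sd z by rewrite ctE; exact: aux1 fz ef.
  have F2 : gs b w z <= g z + ct' * sd' z by rewrite ctE'; exact: aux1 gz eg.
  have om1' : 0 <= 1 - omega by rewrite subr_ge0.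
  have G1 := lerD (ler_wpM2l om0 F1) (ler_wpM2l om1' F2).
  have G2 := lerD (ler_wpM2l om0 hAf) (ler_wpM2l om1' hAg).
  apply: (fin_aux _ _ _ _ _ _ _ _ _ _ _ G1 G2 G3).
  by rewrite (mulrA omega ct) (mulrA (1 - omega) ct'); exact: HS.
have h1 : ((p * p)%:E <= P (Af `&` Ag))%E.
  by rewrite hind EFinM; apply: lee_pmul; rewrite ?lee_fin.
have h2 : (P (Af `&` Ag) <= P Tg + P Bad)%E.
  apply: le_trans (measureU2 _ mTg mBad).
  apply: le_measure => //; rewrite inE; [exact: measurableI | exact: measurableU].
rewrite EFinB leeBlDr // expr2.
apply: le_trans h1 (le_trans h2 _).
exact: leeD2l.
Qed.
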